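(* Let $k,r \in \mathbb{N}$ and $s \in [0, r]$. Then \[\mathsf{D}_k(C_{2}^{r}) \le \mathsf{D}_{\mathsf{D}_{k}(C_2^s) - s} (C_2^{r-s}) + s.\]
   Context: $C_2^m$ is the elementary abelian $2$-group of rank $m$ ($C_2^0$ is the trivial group). A sequence over a finite abelian group $G$ is a finite unordered list of elements with repetitions; zero-sum means its terms sum to $0$. $\mathsf{D}_k(G)$ ($k\in\mathbb{N}$) is the smallest $\ell$ such that every sequence over $G$ of length at least $\ell$ has $k$ disjoint non-empty zero-sum subsequences. *)

(* Defs.v *)
From HB Require Import structures.
From mathcomp Require Import all_boot all_algebra.
From mathcomp Require Import boolp.
Set Implicit Arguments. Unset Strict Implicit. Unset Printing Implicit Defensive.
Import GRing.Theory.
Local Open Scope ring_scope.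

Definition C2pow (m : nat) := 'rV['F_2]_m.

Definition has_k_disjoint_zs (G : zmodType) (k : nat) (s : seq G) : Prop :=
  exists f : 'I_(size s) -> option 'I_k,
    forall j : 'I_k,
      (exists i : 'I_(size s), f i = Some j) /\
      \sum_(i : 'I_(size s) | f i == Some j) nth 0 s i = 0.

Definition Dk_ok (G : zmodType) (k l : nat) : Prop :=
  forall s : seq G, (l <= size s)%N -> has_k_disjoint_zs k s.

(* D_k(G): the smallest such l (defined as 0 if none exists; it always exists
   for finite G). *)
Definition Dk (G : zmodType) (k : nat) : nat :=
  match pselect (exists l, Dk_ok G k l) with
  | left h => @ex_minn (fun l => `[< Dk_ok G k l >]) (let: ex_intro l hl := h in
                 ex_intro _ l (asboolT hl))
  | right _ => 0%N
  end.

(* Main.v *)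
Require Import Defs.
From mathcomp Require Import all_boot all_algebra.
From mathcomp Require Import boolp.
Set Implicit Arguments. Unset Strict Implicit. Unset Printing Implicit Defensive.
Import GRing.Theory.
Local Open Scope ring_scope.

Lemma F2add (a : 'F_2) : a + a = 0.
Proof. by case: a => -[|[|//]] ?; apply/val_inj. Qed.
Lemma F2one (a : 'F_2) : a != 0 -> a = 1.
Proof. by case: a => -[|[|//]] ? //; move=> _; apply/val_inj. Qed.
Lemma F2addm m n (A : 'M['F_2]_(m, n)) : A + A = 0.
Proof. by apply/matrixP => i j; rewrite !mxE F2add. Qed.

Lemma Dk_spec (G : zmodType) k l : Dk_ok G k l -> (Dk G k <= l)%N /\ Dk_ok G k (Dk G k).
Proof.
move=> hl; rewrite /Dk; case: pselect => [h|[]]; last by exists l.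
case: ex_minnP => n /asboolP hn hmin; split => //.
by apply: hmin; apply/asboolP.
Qed.

Lemma sum_count (T : finType) (s : seq T) : \sum_(x : T) count_mem x s = size s.
Proof.
elim: s => [|a s IH] /=; first by rewrite big1.
rewrite big_split /= IH (bigD1 a) //= eqxx big1 ?addn0 ?add1n // => x.
by rewrite eq_sym => /negbTE ->.
Qed.

Lemma pigeon (T : finType) (s : seq T) c : (c * #|T| <= size s)%N ->
  (0 < #|T|)%N -> exists x, (c <= count_mem x s)%N.
Proof.
move=> hs hT; case: (pickP (fun x => c <= count_mem x s)%N) => [x hx|hn].
  by exists x.
case: c hs hn => [|c] hs hn.
  by case/card_gt0P: hT => x _; have := hn x.
have : (size s <= c * #|T|)%N.
  rewrite -sum_count -sum1_card big_distrr /=.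
  by apply: leq_sum => x _; rewrite muln1 -ltnS ltnNge hn.
rewrite leqNgt => /negP []; apply: leq_trans hs.
by rewrite ltn_pmul2r.
Qed.

Lemma halfE q j : (q./2 == j) = (q == j.*2) || (q == j.*2.+1).
Proof.
apply/eqP/orP => [<-|].
  move: (odd_double_half q); case: odd => /= qE; [right|left]; by rewrite -{1}qE.
case=> /eqP ->; first by rewrite doubleK.
by rewrite -[j.*2.+1]/(true + j.*2)%N half_bit_double.
Qed.
Lemma exist_ok n L : Dk_ok (C2pow n) L (L.*2 * #|'rV['F_2]_n|).
Proof.
move=> S hS; set N := size S.
have [x hx] : exists x : 'rV['F_2]_n, (L.*2 <= count_mem x S)%N.
  by apply: pigeon => //; apply/card_gt0P; exists 0.
pose P := [seq i <- iota 0 N | nth 0 S i == x].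
have sP : size P = count_mem x S.
  rewrite size_filter -{2}(mkseq_nth 0 S) /mkseq count_map.
  by apply: eq_count => i.
have uP : uniq P by rewrite filter_uniq // iota_uniq.
have PN i : i \in P -> (i < N)%N by rewrite mem_filter mem_iota add0n => /andP[].
have Px i : i \in P -> nth 0 S i = x by rewrite mem_filter => /andP[/eqP].
pose f (i : 'I_N) : option 'I_L := if val i \in P then insub (index (val i) P)./2 else None.
exists f => j.
have h2j : (j.*2.+1 < size P)%N.
  by rewrite sP; apply: leq_trans hx; rewrite -doubleS leq_double; exact: ltn_ord.
have h2j' : (j.*2 < size P)%N by apply: ltnW.
have ia : (nth 0%N P j.*2 < N)%N by apply/PN/mem_nth.
have ib : (nth 0%N P j.*2.+1 < N)%N by apply/PN/mem_nth.
have fP (i : 'I_N) : (f i == Some j) = (val i == nth 0%N P j.*2) || (val i == nth 0%N P j.*2.+1).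
  rewrite /f; case: ifP => iP.
    set q0 := index (val i) P.
    have ilt : (q0 < size P)%N by rewrite index_mem.
    have ei : val i = nth 0%N P q0 by rewrite nth_index.
    rewrite ei !nth_uniq // -halfE.
    case: insubP => [q _ qv|].
      apply/eqP/eqP => [[qj]|h]; first by rewrite -qv qj.
      have -> : q = j by apply: val_inj; rewrite qv h.
      by [].
    move=> hL; apply/esym/negbTE; move: hL; apply: contra => /eqP ->; exact: ltn_ord.
  apply/esym/negbTE; apply/negP => /orP[]/eqP ei; move: iP; rewrite ei mem_nth //.
split. idtac.
  by exists (Ordinal ia); apply/eqP; rewrite fP /= eqxx.
have neab : (Ordinal ib != Ordinal ia).
  apply/eqP => /(congr1 val) /= /eqP; rewrite nth_uniq //.
  by rewrite (gtn_eqF (ltnSn _)).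
rewrite (eq_bigl _ _ fP) (bigD1 (Ordinal ia)) /=; last by apply/orP; left.
rewrite (bigD1 (Ordinal ib)) /=; last first.
  by apply/andP; split; [apply/orP; right|exact: neab].
rewrite big1 ?addr0; last first.
  move=> i /andP[/andP[/orP[]/eqP ei hia] hib].
    by move: hia => /negP []; apply/eqP; apply: val_inj.
  by move: hib => /negP []; apply/eqP; apply: val_inj.
rewrite !Px ?mem_nth //; exact: F2addm.
Qed.

Lemma Dk_full n k : Dk_ok (C2pow n) k (Dk (C2pow n) k).
Proof. exact: (Dk_spec (@exist_ok n k)).2. Qed.
Lemma transfer n (A : 'M['F_2]_n) (S : seq 'rV['F_2]_n) k : A \in unitmx ->
  has_k_disjoint_zs k [seq x *m A | x <- S] -> has_k_disjoint_zs k S.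
Proof.
move=> uA; rewrite /has_k_disjoint_zs size_map => -[f hf]; exists f => j.
have [h1 h2] := hf j; split => //.
have : (\sum_(i < size S | f i == Some j) nth 0 S i) *m A = 0.
  rewrite mulmx_suml; apply: etrans h2; apply: eq_bigr => i _.
  by rewrite (nth_map 0) // mul0mx.
by move/(congr1 (mulmx^~ (invmx A))); rewrite mulmxK // mul0mx.
Qed.

Lemma compose (G : zmodType) (S : seq G) L (g : 'I_(size S) -> option 'I_L) k :
 (forall l, exists i, g i = Some l) ->
 has_k_disjoint_zs k (mkseq (fun p => \sum_(i | omap val (g i) == Some p) nth 0 S i) L) ->
 has_k_disjoint_zs k S.
Proof.
move=> hg; rewrite /has_k_disjoint_zs size_mkseq => -[h hh].
exists (fun i => obind h (g i)) => j.
have [[p hp] hs] := hh j; split.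
  by have [i hi] := hg p; exists i; rewrite hi.
apply: (etrans _ hs).
have e1 (p0 : 'I_L) : nth 0 (mkseq (fun p => \sum_(i | omap val (g i) == Some p) nth 0 S i) L) p0
   = \sum_(i | g i == Some p0) nth 0 S i.
  rewrite nth_mkseq //; apply: eq_bigl => i.
  by case: (g i) => [q|] //=; rewrite !inj_eq //; exact: val_inj.
rewrite (eq_bigr _ (fun p0 _ => e1 p0)).
rewrite [RHS](eq_bigr (fun p0 => \sum_i (if g i == Some p0 then nth 0 S i else 0))); last first.
  by move=> p0 _; rewrite big_mkcond.
rewrite exchange_big /= big_mkcond /=; apply: eq_bigr => i _.
case: (g i) => [p0|] /=; last by rewrite big1.
rewrite -big_mkcondr /=.
have eS (q : 'I_L) : (Some p0 == Some q) = (q == p0).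
  by rewrite eq_sym; apply/eqP/eqP => [[]|->].
case: (boolP (h p0 == Some j)) => hp0.
  rewrite (big_pred1 p0) ?hp0 // => q /=.
  by rewrite eS; case: (q =P p0) => [->|]; [rewrite hp0 | rewrite andbF].
rewrite big_pred0 // => q /=.
by rewrite eS; case: (q =P p0) => [->|]; [rewrite (negbTE hp0) | rewrite andbF].
Qed.
Lemma lsub_ok s t k (U : seq 'rV['F_2]_(s + t)) :
  (forall p, (p < size U)%N -> rsubmx (nth 0 U p) = 0) ->
  has_k_disjoint_zs k (map lsubmx U) -> has_k_disjoint_zs k U.
Proof.
move=> hU; rewrite /has_k_disjoint_zs size_map => -[f hf]; exists f => j.
have [h1 h2] := hf j; split => //.
rewrite -[LHS]hsubmxK.
have -> : lsubmx (\sum_(i < size U | f i == Some j) nth 0 U i) = 0.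
  rewrite -{}[RHS]h2 linear_sum; apply: eq_bigr => i _.
  by rewrite (nth_map 0) // linear0.
have -> : rsubmx (\sum_(i < size U | f i == Some j) nth 0 U i) = 0.
  by rewrite linear_sum big1 // => i _; apply: hU.
by rewrite row_mx0.
Qed.
Lemma WL n (s : 'I_n) (z : 'rV['F_2]_n) (L : 'cV['F_2]_n) :
  (forall c : 'I_n, (c < s)%N -> L c 0 = 0) ->
  (forall c : 'I_n, (s <= c)%N -> z 0 c = 0) -> z *m L = 0.
Proof.
move=> hL hz; apply/matrixP => a b; rewrite !mxE !ord1 big1 // => c _.
by case: (ltnP c s) => h; [rewrite hL // mulr0 | rewrite hz // mul0r].
Qed.

Lemma stepB n (s : 'I_n) (y : 'rV['F_2]_n) (L : 'cV['F_2]_n) :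
  (forall c : 'I_n, (c < s)%N -> L c 0 = 0) -> y *m L = 1%:M -> delta_mx 0 s *m L = 1%:M ->
  let B := 1%:M + L *m (y + delta_mx 0 s) in
  [/\ B \in unitmx, y *m B = delta_mx 0 s &
      forall z : 'rV_n, (forall c : 'I_n, (s <= c)%N -> z 0 c = 0) -> z *m B = z].
Proof.
move=> hL hy hd B.
have uL : (y + delta_mx 0 s) *m L = 0 by rewrite mulmxDl hy hd F2addm.
split.
- have : B *m B = 1%:M.
    rewrite /B; set u := y + delta_mx 0 s.
    rewrite mulmxDl mul1mx mulmxDr mulmx1 -!mulmxA (mulmxA u L u) uL mul0mx mulmx0 addr0.
    by rewrite -addrA F2addm addr0.
  by case/mulmx1_unit.
- by rewrite /B mulmxDr mulmx1 mulmxA hy mul1mx addrA F2addm add0r.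
- move=> z hz; rewrite /B mulmxDr mulmx1 mulmxA (WL hL hz) mul0mx addr0 //.
Qed.
Lemma mulL_delta n (y : 'rV['F_2]_n) (c : 'I_n) : (y *m delta_mx c 0) = (y 0 c)%:M.
Proof. by rewrite -colE; apply/matrixP => a b; rewrite !ord1 !mxE eqxx mulr1n. Qed.

Lemma LA n (S : seq 'rV['F_2]_n) s : (s <= n)%N -> (s <= size S)%N ->
  exists A : 'M['F_2]_n, A \in unitmx /\ exists e : seq nat,
   [/\ uniq e, size e = s, (forall i, i \in e -> (i < size S)%N) &
       forall i, i \in e -> forall c : 'I_n, (s <= c)%N -> (nth 0 S i *m A) 0 c = 0].
Proof.
elim: s => [|s IH] hsn hsN.
  exists 1%:M; split; first exact: unitmx1.
  by exists [::].
have [A [uA [e [ue se eN eA]]]] := IH (ltnW hsn) (ltnW hsN).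
set N := size S in hsN eN *.
have [i0 i0N i0e] : exists2 i0, (i0 < N)%N & i0 \notin e.
  have : ~~ all (fun i => i \in e) (iota 0 N).
    apply/negP => /allP hall.
    have := uniq_leq_size (iota_uniq 0 N) hall.
    by rewrite size_iota se leqNgt hsN.
  by case/allPn => i0; rewrite mem_iota add0n => /andP[_ i0N] i0e; exists i0.
have sn : (s < n)%N by [].
pose so := Ordinal sn.
pose y i := nth 0 S i *m A.
pose Q i := [exists c : 'I_n, (s <= c)%N && (y i 0 c != 0)].
case: (boolP (has (fun i => (i \notin e) && Q i) (iota 0 N))) => hQ; last first.
  exists A; split => //; exists (i0 :: e); split => /=.
  - by rewrite i0e.
  - by rewrite se.
  - by move=> i; rewrite inE => /orP[/eqP ->|/eN].
  move=> i; rewrite inE => /orP[/eqP ->|ie] c hc; last by apply: eA => //; apply: ltnW.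
  apply/eqP; apply: contraR hQ => hy; apply/hasP; exists i0; first by rewrite mem_iota.
  by rewrite i0e /=; apply/existsP; exists c; rewrite ltnW.
case/hasP: hQ => i; rewrite mem_iota add0n => /andP[_ iN] /andP[ie /existsP[c0 /andP[hc0 yc0]]].
have [L [hL1 hL2 hL3]] : exists L : 'cV['F_2]_n, [/\ forall c : 'I_n, (c < so)%N -> L c 0 = 0,
     y i *m L = 1%:M & delta_mx 0 so *m L = 1%:M].
  have d0 (c : 'I_n) : (c < so)%N -> delta_mx so 0 c 0 = 0 :> 'F_2.
    by move=> hc; rewrite mxE -val_eqE /= (ltn_eqF hc).
  have dso : delta_mx 0 so *m delta_mx so 0 = 1%:M :> 'M['F_2]_1.
    by rewrite mulL_delta mxE !eqxx.
  case: (boolP (y i 0 so != 0)) => hs0.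
    exists (delta_mx so 0); split; [exact: d0 | | exact: dso].
    by rewrite mulL_delta (F2one hs0).
  have nc0 : c0 != so by apply: contraNneq hs0 => <-.
  exists (delta_mx so 0 + delta_mx c0 0); split.
  - move=> c hc; rewrite mxE d0 // add0r mxE -val_eqE /= ltn_eqF //.
    exact: leq_trans hc hc0.
  - by rewrite mulmxDr !mulL_delta (eqP (negbNE hs0)) (F2one yc0) raddf0 add0r.
  - rewrite mulmxDr dso mulL_delta mxE (negbTE nc0) andbF /=.
    by rewrite raddf0 addr0.
have [uB yB zB] := stepB hL1 hL2 hL3.
exists (A *m (1%:M + L *m (y i + delta_mx 0 so))); split; first by rewrite unitmx_mul uA uB.
exists (i :: e); split => /=.
- by rewrite ie.
- by rewrite se.
- by move=> x; rewrite inE => /orP[/eqP ->|/eN].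
move=> x; rewrite inE => /orP[/eqP ->|xe] c hc; rewrite mulmxA.
  by rewrite yB mxE (_ : (c == so) = false) // -val_eqE /= gtn_eqF.
rewrite zB; first by apply: eA => //; apply: ltnW.
exact: eA.
Qed.
Lemma mainl s t k m Dm D : Dk_ok (C2pow t) m Dm -> Dk_ok (C2pow s) k D ->
  (D <= s + m)%N -> Dk_ok (C2pow (s + t)) k (Dm + s).
Proof.
move=> hT hS hD S hN; set N := size S.
have [A [uA [e [ue se eN eA]]]] := @LA _ S s (leq_addr t s) (leq_trans (leq_addl Dm s) hN).
apply: (transfer uA).
set S' := [seq x *m A | x <- S].
have sS' : size S' = N by rewrite size_map.
have nS' i : (i < N)%N -> nth 0 S' i = nth 0 S i *m A by move=> hi; rewrite (nth_map 0).
pose rest := [seq i <- iota 0 N | i \notin e].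
have urest : uniq rest by rewrite filter_uniq // iota_uniq.
have mrest x : (x \in rest) = (x < N)%N && (x \notin e).
  by rewrite mem_filter mem_iota add0n andbC.
pose F i := rsubmx (nth 0 S' i).
pose T := [seq F i | i <- rest].
have hrest : (Dm <= size T)%N.
  rewrite size_map size_filter.
  have c1 : (count (mem e) (iota 0 N) <= s)%N.
    rewrite -size_filter -se; apply: uniq_leq_size; first by rewrite filter_uniq // iota_uniq.
    by move=> x; rewrite mem_filter => /andP[].
  have := count_predC (mem e) (iota 0 N); rewrite size_iota => cE.
  rewrite -(leq_add2l (count (mem e) (iota 0 N))) cE.
  apply: (@leq_trans (Dm + s)) => //; by rewrite addnC leq_add2l.
have [h hh] := hT T hrest.
pose h' p := obind h (insub p).
pose gn x := if x \in e then omap (@lshift s m) (insub (index x e))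
             else omap (@rshift s m) (h' (index x rest)).
apply: (@compose _ S' (s + m) (fun i => gn (val i))).
  move=> l; case: (splitP l) => [a|b] la.
    have ae : nth 0%N e a \in e by apply: mem_nth; rewrite se.
    have iN : (nth 0%N e a < size S')%N by rewrite sS'; apply: eN.
    exists (Ordinal iN); rewrite /gn /= ae index_uniq ?se // valK /=.
    by rewrite (_ : lshift m a = l) //; apply: val_inj; rewrite /= la.
  have [[q hq] _] := hh b.
  have qr : (q < size rest)%N by rewrite -(size_map F); exact: ltn_ord.
  have : nth 0%N rest q \in rest by apply: mem_nth.
  rewrite mrest => /andP[iN ie].
  rewrite -sS' in iN.
  exists (Ordinal iN); rewrite /gn /= (negbTE ie) index_uniq // /h' valK /= hq /=.
  by rewrite (_ : rshift s b = l) //; apply: val_inj; rewrite /= la.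
apply: lsub_ok.
  move=> p; rewrite size_mkseq => hp; rewrite nth_mkseq // linear_sum /=.
  case: (ltnP p s) => ps.
    apply: big1 => i /eqP; rewrite /gn; case: ifP => ie.
      move=> _; have iN : (i < N)%N by rewrite -sS'.
      rewrite nS' //; apply/matrixP => a c; by rewrite mxE (ord1 a) eA ?mxE // leq_addr.
    case: (h' _) => [c|] //= [] hc.
    by move: ps; rewrite -hc ltnNge leq_addr.
  have bm : (p - s < m)%N by rewrite ltn_subLR.
  have [_ hz] := hh (Ordinal bm).
  rewrite -[RHS]hz; set b := Ordinal bm.
  rewrite (eq_bigr (fun q : 'I_(size T) => F (nth 0%N rest q))); last first.
    by move=> q _; rewrite (nth_map 0%N) // -(size_map F).
  rewrite (eq_bigl (fun q : 'I_(size T) => h' q == Some b)); last by move=> q; rewrite /h' valK.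
  rewrite -(big_mkord (fun q => h' q == Some b) (fun q => F (nth 0%N rest q))).
  have sT : size T = size rest by rewrite size_map.
  rewrite sT.
  rewrite big_nat_cond (eq_bigl (fun q => (0 <= q < size rest)%N &&
     (h' (index (nth 0%N rest q) rest) == Some b))); last first.
    by move=> q /=; case hq: (q < size rest)%N => //=; rewrite index_uniq.
  rewrite -big_nat_cond -(@big_nth _ _ _ _ 0%N rest (fun x => h' (index x rest) == Some b) F).
  rewrite big_filter_cond.
  rewrite -(big_mkord (fun i => omap val (gn i) == Some p) F) sS'.
  have -> : iota 0 N = index_iota 0 N by rewrite /index_iota subn0.
  apply: eq_bigl => x; rewrite /gn; case: ifP => xe /=.
    case: insub => [a|] //=; apply/negbTE; rewrite -[p](subnKC ps).
    apply/eqP => -[] ha; move: (ltn_ord a); rewrite ha ltnNge leq_addr.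
    by [].
  case: (h' _) => [c|] //=; rewrite -[p](subnKC ps).
  apply/eqP/eqP => [[] /eqP|[] -> //]; rewrite eqn_add2l => /eqP hc.
  by rewrite (_ : c = b) //; apply: val_inj.
apply: hS; by rewrite size_map size_mkseq.
Qed.

Local Close Scope ring_scope.

Theorem theorem7p15 (k r s : nat) (hk : (0 < k)%N) (hsr : (s <= r)%N) :
  (Dk (C2pow r) k <= Dk (C2pow (r - s)) (Dk (C2pow s) k - s) + s)%N.
Proof.
have [t ->] : exists t, r = s + t by exists (r - s); rewrite (subnKC hsr).
rewrite addKn.
set D := Dk (C2pow s) k; set m := D - s.
have hD : (D <= s + m)%N by rewrite /m -leq_subLR.
exact: (Dk_spec (mainl (@Dk_full t m) (@Dk_full s k) hD)).1.
Qed.
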